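(* Let $\{\lambda_n\}_{n\geq 1}$ be i.i.d. random variables, each uniformly distributed on the interval $(3.87,4)$, and let $X_0$ be a $(0,1)$-valued random variable independent of the $\lambda_n$'s. Define the Markov process $X_{n+1}=\lambda_{n+1}X_n(1-X_n)$ for $n\geq 0$, and let $p^n(x,B)=\mathrm{Prob}(X_n\in B\mid X_0=x)$ denote its $n$-step transition probabilities. Let $A$ be a nonempty open subset of $(0,1)$. Then for every $x\in(0,1)$ there exists a positive integer $M$ such that $p^M(x,A)=\mathrm{Prob}(X_M\in A\mid X_0=x)>0$.
   Context: The one-step transition probability is $p(x,B)=\mathrm{Prob}(\lambda_1 x(1-x)\in B)$ for Borel $B\subset(0,1)$, and $p^n$ is the $n$-step transition probability of the Markov chain. *)

(* Defs.v *)
From HB Require Import structures.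
From mathcomp Require Import all_boot all_order all_algebra.
From mathcomp Require Import all_classical all_reals all_analysis.
From mathcomp Require Import uniform_distribution.
Set Implicit Arguments. Unset Strict Implicit. Unset Printing Implicit Defensive.
Import Order.TTheory GRing.Theory Num.Theory.
Local Open Scope classical_set_scope.
Local Open Scope ring_scope.

Definition lam_lo {R : realType} : R := 387 / 100.
Definition lam_hi {R : realType} : R := 4.

Lemma lam_lo_lt_hi (R : realType) : (lam_lo : R) < lam_hi.
Proof.
rewrite /lam_lo /lam_hi ltr_pdivrMr //; by rewrite -natrM ltr_nat.
Qed.

(* Law of lambda_n : uniform probability on [3.87, 4]
   (the endpoints are Lebesgue-null, so this is the same as on (3.87,4)). *)
Definition lam_law (R : realType) := uniform_prob (lam_lo_lt_hi R).

Definition logistic {R : realType} (l x : R) : R := l * x * (1 - x).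

(* n-step transition probability p^n(x,B) of the Markov chain
   X_{k+1} = lambda_{k+1} X_k (1 - X_k):
   p^0(x,B) = 1_B(x),  p^{n+1}(x,B) = E[ p^n(lambda x (1-x), B) ],
   with lambda ~ Uniform(3.87,4). *)
Fixpoint ptrans {R : realType} (n : nat) (x : R) (B : set R) : \bar R :=
  match n with
  | 0%N => (\1_B x)%:E
  | n'.+1 => (\int[@lam_law R]_l ptrans n' (logistic l x) B)%E
  end.

(* Main.v *)
Require Import Defs.
From HB Require Import structures.
From mathcomp Require Import all_boot all_order all_algebra.
From mathcomp Require Import all_classical all_reals all_analysis.
From mathcomp Require Import uniform_distribution measurable_realfun ring lra.
Import Order.TTheory GRing.Theory Num.Theory.
Import numFieldNormedType.Exports.
Local Open Scope classical_set_scope.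
Local Open Scope ring_scope.

Lemma le_integral_nm d (T : measurableType d) (R : realType)
  (mu : {measure set T -> \bar R}) (f g : T -> \bar R) :
  (forall x, (0 <= f x)%E) -> (forall x, (f x <= g x)%E) ->
  (\int[mu]_x f x <= \int[mu]_x g x)%E.
Proof.
move=> f0 fg.
have g0 : forall x, (0 <= g x)%E by move=> x; exact: le_trans (f0 x) (fg x).
rewrite (ge0_integralTE _ f0) (ge0_integralTE _ g0).
apply: ereal_sup_le => _ [h /= hf <-]; exists h => //= x.
exact: le_trans (hf x) (fg x).
Qed.

Lemma lam_law_itv (R : realType) (a b : R) : lam_lo <= a -> a < b -> b <= lam_hi ->
  (0 < @lam_law R `[a, b])%E.
Proof.
move=> la ab bh.
rewrite /lam_law /uniform_prob integral_uniform_pdf.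
have -> : `[a, b]%classic `&` `[lam_lo, lam_hi]%classic = `[a, b]%classic :> set R.
  apply/seteqP; split => x /=; first by case.
  rewrite !in_itv /= => /andP[ax xb]; split; rewrite ?in_itv /= ?ax ?xb //.
  by rewrite (le_trans la ax) (le_trans xb bh).
rewrite (eq_integral (fun=> ((lam_hi - lam_lo)^-1)%:E)); last first.
  move=> x; rewrite inE /= in_itv /= => /andP[ax xb].
  by rewrite /uniform_pdf (le_trans la ax) (le_trans xb bh).
rewrite integral_cst //= lebesgue_measure_itv /= lte_fin ab.
rewrite -EFinD -EFinM lte_fin mulr_gt0 // ?invr_gt0 ?subr_gt0 //.
exact: lam_lo_lt_hi.
Qed.


Lemma logistic_cont (R : realType) (l0 y δ : R) : 0 < δ -> 0 <= l0 <= 4 ->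
  exists η, 0 < η /\ exists δ', 0 < δ' /\ forall l y',
    `|l - l0| < η -> `|y - y'| < δ' -> `|logistic l0 y - logistic l y'| < δ.
Proof.
move=> d0 /andP[l00 l04].
set Y := `|y| + 1.
have Y1 : 1 <= Y by rewrite /Y lerDr.
set K := Y * (1 + Y).
set L := 1 + 2 * Y.
have KP : 0 < K by rewrite /K mulr_gt0 //; lra.
have LP : 0 < L by rewrite /L; lra.
set η := δ / (2 * K).
set δ1 := δ / (8 * L).
have eK : η * K = δ / 2 by rewrite /η; field; rewrite gt_eqF.
have eL : 4 * δ1 * L = δ / 2 by rewrite /δ1; field; rewrite gt_eqF.
exists η; split; first by rewrite divr_gt0 // mulr_gt0.
exists (Num.min 1 δ1); split.
  by rewrite lt_min ltr01 divr_gt0 // mulr_gt0.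
move=> l y' hl; rewrite lt_min => /andP[hy1 hy2].
have hy' : `|y'| <= Y.
  have -> : y' = y - (y - y') by ring.
  rewrite /Y (le_trans (ler_normB _ _)) // lerD2l ltW //.
have -> : logistic l0 y - logistic l y' =
   l0 * (y - y') * (1 - y - y') - (l - l0) * (y' * (1 - y')) by rewrite /logistic; ring.
rewrite (le_lt_trans (ler_normB _ _)) // !normrM.
have hw : `|1 - y - y'| <= L.
  rewrite (le_trans (ler_normB _ _)) // (le_trans (lerD (ler_normB _ _) (lexx _))) //.
  rewrite normr1 /L /Y; move: hy'; rewrite /Y; lra.
have hz : `|y'| * `|1 - y'| <= K.
  apply: ler_pM => //; rewrite (le_trans (ler_normB _ _)) // normr1 lerD2l //.
have e1 : `|l - l0| * (`|y'| * `|1 - y'|) <= δ / 2.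
  by rewrite -eK; apply: ler_pM => //; exact: ltW.
have e2 : `|l0| * `|y - y'| * `|1 - y - y'| < δ / 2.
  have hl0 : `|l0| <= 4 by rewrite ger0_norm.
  rewrite -eL; apply: le_lt_trans (ler_pM _ _ (ler_pM _ _ hl0 (lexx _)) hw) _ => //.
  rewrite ltr_pM2r // ltr_pM2l //.
lra.
Qed.

Set Implicit Arguments. Unset Strict Implicit. Unset Printing Implicit Defensive.

Lemma lam_law_itv' (R : realType) (a b : R) : lam_lo <= a -> a < b -> b <= lam_hi ->
  @lam_law R `[a, b] = ((lam_hi - lam_lo)^-1 * (b - a))%:E.
Proof.
move=> la ab bh.
rewrite /lam_law /uniform_prob integral_uniform_pdf.
have -> : `[a, b]%classic `&` `[lam_lo, lam_hi]%classic = `[a, b]%classic :> set R.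
  apply/seteqP; split => x /=; first by case.
  rewrite !in_itv /= => /andP[ax xb]; split; rewrite ?in_itv /= ?ax ?xb //.
  by rewrite (le_trans la ax) (le_trans xb bh).
rewrite (eq_integral (fun=> ((lam_hi - lam_lo)^-1)%:E)); last first.
  move=> x; rewrite inE /= in_itv /= => /andP[ax xb].
  by rewrite /uniform_pdf (le_trans la ax) (le_trans xb bh).
by rewrite integral_cst //= lebesgue_measure_itv /= lte_fin ab -EFinD -EFinM.
Qed.

Lemma ptrans_ge0 (R : realType) n (x : R) B : (0 <= ptrans n x B)%E.
Proof.
elim: n x => [|n IH] x /=; first by rewrite lee_fin indicE.
by apply: integral_ge0 => l _.
Qed.

Definition Pgood (R : realType) (A : set R) n (y : R) := exists c : R, 0 < c /\
  exists δ, 0 < δ /\ forall y', `|y - y'| < δ -> (c%:E <= ptrans n y' A)%E.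

Lemma step (R : realType) (A : set R) n y l0 : lam_lo <= l0 <= lam_hi ->
  Pgood A n (logistic l0 y) -> Pgood A n.+1 y.
Proof.
move=> /andP[hl0 hl1] [c [c0 [δ [d0 H]]]].
have lh : (lam_lo : R) < lam_hi := lam_lo_lt_hi R.
have l04 : 0 <= l0 <= 4.
  by apply/andP; split; move: hl0 hl1; rewrite /lam_lo /lam_hi; lra.
have [η [e0 [δ' [d'0 Hc]]]] := @logistic_cont R l0 y δ d0 l04.
set a' := Num.max lam_lo (l0 - η / 2).
set b' := Num.min lam_hi (l0 + η / 2).
have la : lam_lo <= a' by rewrite /a' le_max lexx.
have bh : b' <= lam_hi by rewrite /b' ge_min lexx.
have ab : a' < b'.
  rewrite /a' /b' gt_max !lt_min lh /=.
  apply/and3P; split; lra.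
set m := (lam_hi - lam_lo)^-1 * (b' - a').
have m0 : 0 < m by rewrite /m mulr_gt0 // ?invr_gt0 subr_gt0.
exists (c * m); split; first exact: mulr_gt0.
exists δ'; split => // y' hy' /=.
apply: (@le_trans _ _ (\int[@lam_law R]_l (c%:E * (\1_(`[a', b']%classic) l)%:E))%E); last apply: le_integral_nm.
- rewrite ge0_integralZl //.
  + by rewrite integral_indic // setIT EFinM /m -(lam_law_itv' la ab bh) //.
  all: try (by apply/measurable_EFinP; exact: measurable_indic).
  all: try (by move=> x _; rewrite lee_fin indicE).
  all: try (by rewrite lee_fin ltW).
- move=> l /=; apply: mule_ge0; rewrite lee_fin; [exact: ltW | by rewrite indicE].
- move=> l; rewrite indicE; have [lS|lS] := boolP (l \in `[a', b']%classic); last first.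
    by rewrite mule0 ptrans_ge0.
  rewrite mule1; move: lS; rewrite inE /= in_itv /= => /andP[al lb].
  apply: H; apply: Hc => //.
  move: al lb; rewrite /a' /b' ge_max le_min => /andP[_ ha] /andP[_ hb].
  rewrite ltr_norml; apply/andP; split; lra.
Qed.


Definition ss {R : realType} (x : R) := sin x ^+ 2.

Lemma ss_double (R : realType) (x : R) : ss (2 * x) = logistic 4 (ss x).
Proof.
rewrite /ss /logistic (_ : 2 * x = x *+ 2); last by rewrite mulr_natl.
rewrite sin_mulr2n -cos2sin2; ring.
Qed.

Lemma ss_cont (R : realType) : continuous (@ss R).
Proof.
move=> x; rewrite /ss.
apply: cvgM; exact: continuous_sin.
Qed.

Lemma ss_pi (R : realType) (x : R) : ss (x + pi) = ss x.
Proof. by rewrite /ss sinDpi sqrrN. Qed.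

Lemma ss_npi (R : realType) (m : nat) : @ss R (m%:R * pi) = 0.
Proof.
elim: m => [|m IH]; first by rewrite mul0r /ss sin0 expr0n.
by rewrite -natr1 mulrDl mul1r ss_pi.
Qed.

Lemma ss_npi2 (R : realType) (m : nat) : @ss R (m%:R * pi + pi / 2) = 1.
Proof.
rewrite /ss sinDpihalf cos2sin2.
by move: (ss_npi R m); rewrite /ss => ->; rewrite subr0.
Qed.

Lemma ss_range (R : realType) (x : R) : 0 <= ss x <= 1.
Proof.
rewrite /ss sqr_ge0 /= sin2cos2 lerBlDr lerDl; exact: sqr_ge0.
Qed.

Lemma open_ball (R : realType) (A : set R) a : open A -> A a ->
  exists2 e, 0 < e & forall y, `|a - y| < e -> A y.
Proof.
move=> oA Aa.
have : nbhs a A by apply: open_nbhs_nbhs; split.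
move=> /nbhs_ballP [e e0 H]; exists e => // y hy; by apply: H.
Qed.

Lemma cont_ball (R : realType) (f : R -> R) x e : continuous f -> 0 < e ->
  exists2 d, 0 < d & forall y, `|x - y| < d -> `|f x - f y| < e.
Proof.
move=> cf e0.
have /cvgrPdist_lt /(_ e e0) := cf x.
move=> /nbhs_ballP [d d0 H]; exists d => // y hy; by apply: H.
Qed.


Definition Good (R : realType) (A : set R) (y : R) := exists n, Pgood A n y.

Lemma good_step (R : realType) (A : set R) y l : lam_lo <= l <= lam_hi ->
  Good A (logistic l y) -> Good A y.
Proof. by move=> hl [n Pn]; exists n.+1; exact: step Pn. Qed.

Lemma good0 (R : realType) (A : set R) a : open A -> A a -> Good A a.
Proof.
move=> oA Aa; have [e e0 H] := open_ball oA Aa.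
exists 0%N; rewrite /Pgood; exists 1; split; first exact: ltr01.
exists e; split => // y' hy' /=.
by rewrite indicE (mem_set (H _ hy')) lexx.
Qed.

Lemma lam4 (R : realType) : (@lam_lo R) <= 4 <= (@lam_hi R).
Proof. rewrite /lam_lo /lam_hi; apply/andP; split; lra. Qed.

Lemma doubling (R : realType) (A : set R) (th e : R) :
  (forall x, th - e < x < th + e -> ~ Good A (ss x)) ->
  forall k, forall x, th * 2 ^+ k - e * 2 ^+ k < x < th * 2 ^+ k + e * 2 ^+ k ->
     ~ Good A (ss x).
Proof.
move=> H0; elim=> [|k IH] x.
  by rewrite expr0 !mulr1; exact: H0.
rewrite exprS => hx Gx.
apply: (IH (x / 2)).
  set P := 2 ^+ k in hx *; move: hx => /andP[h1 h2]; apply/andP; split; lra.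
apply: good_step (lam4 R) _.
by rewrite -ss_double (_ : 2 * (x / 2) = x) //; field.
Qed.


Lemma ss_ivt (R : realType) (a b v : R) : a <= b -> ss a = 0 -> ss b = 1 ->
  0 <= v <= 1 -> exists2 c, a <= c <= b & ss c = v.
Proof.
move=> ab sa sb hv.
have hv' : Num.min (ss a) (ss b) <= v <= Num.max (ss a) (ss b).
  by rewrite sa sb ge_min le_max; case/andP: hv => -> ->; rewrite orbT.
have [c hc <-] := @IVT R ss a b v ab (continuous_subspaceT (@ss_cont R)) hv'.
by exists c => //; move: hc; rewrite in_itv.
Qed.

Lemma all_bad (R : realType) (A : set R) (th e : R) : 0 < e -> e < th ->
  (forall x, th - e < x < th + e -> ~ Good A (ss x)) ->
  forall v, 0 <= v <= 1 -> ~ Good A v.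
Proof.
move=> e0 eth H v hv.
have pi0 : (0 : R) < pi := pi_gt0 R.
set N := Num.truncn (2 * pi / e).
have hN := truncn_itv (ltW (divr_gt0 (mulr_gt0 (ltr0Sn R 1) pi0) e0)).
rewrite -/N in hN.
set P : R := 2 ^+ N.+1.
have hP : (N.+1)%:R <= P.
  by rewrite /P -natrX ler_nat ltnW // ltn_expl.
have hP2 : 2 * pi < e * P.
  move: hN => /andP[_ h]; rewrite ltr_pdivrMr // in h.
  apply: (lt_le_trans h); rewrite mulrC ler_pM2l //.
have P0 : 0 < P by rewrite /P exprn_gt0.
set al := th * P - e * P.
have al0 : 0 < al by rewrite /al -mulrBl mulr_gt0 // subr_gt0.
set m := (Num.truncn (al / pi)).+1.
have hm := truncn_itv (ltW (divr_gt0 al0 pi0)).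
have hm1 : al < m%:R * pi by move: hm => /andP[_]; rewrite ltr_pdivrMr.
have hm2 : m%:R * pi <= al + pi.
  move: hm => /andP[h _]; rewrite ler_pdivlMr // in h.
  by rewrite /m -natr1 mulrDl mul1r lerD2r.
have hle : (m%:R * pi : R) <= m%:R * pi + pi / 2.
  by move: pi0; lra.
have [z hz <-] := @ss_ivt R (m%:R * pi) (m%:R * pi + pi / 2) v
  hle (ss_npi R m) (ss_npi2 R m) hv.
apply: (doubling H (k := N.+1)); rewrite -/P.
move: hz => /andP[z1 z2]; apply/andP; split.
  by rewrite -/al; lra.
move: hP2 z2 hm2; rewrite /al; lra.
Qed.


Theorem mainTheorem1 (R : realType) (A : set R) :
  open A -> A `<=` `]0, 1[ -> A !=set0 ->
  forall x : R, 0 < x < 1 ->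
  exists M : nat, (0 < M)%N /\ (0 < ptrans M x A)%E.
Proof.
move=> oA sA [a Aa] x /andP[x0 x1].
have Ga := good0 oA Aa.
have a01 : 0 <= a <= 1.
  by have := sA a Aa; rewrite /= in_itv /= => /andP[h1 h2]; rewrite ltW // ltW.
set q := x * (1 - x).
have q0 : 0 < q by rewrite /q mulr_gt0 // subr_gt0.
have q4 : q <= 1 / 4.
  have := sqr_ge0 (x - 1 / 2); rewrite /q; nra.
have lh : (lam_lo : R) < lam_hi := lam_lo_lt_hi R.
have [t [/andP[t1 t2] [n Pn]]] : exists t, lam_lo * q <= t <= lam_hi * q /\ Good A t.
  case: (pselect (exists t, lam_lo * q <= t <= lam_hi * q /\ Good A t)) => [//|Hn].
  exfalso.
  set mid := (lam_lo + lam_hi) / 2 * q.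
  set r := (lam_hi - lam_lo) / 2 * q.
  have r0 : 0 < r by rewrite /r mulr_gt0 // divr_gt0 // subr_gt0.
  have mid01 : 0 <= mid <= 1.
    by rewrite /mid /lam_lo /lam_hi; apply/andP; split; move: q0 q4; nra.
  have s0 : @ss R 0 = 0 by rewrite /ss sin0 expr0n.
  have s1 : @ss R (pi / 2) = 1 by rewrite /ss sin_pihalf expr1n.
  have pi0 : (0 : R) < pi := pi_gt0 R.
  have hle : (0 : R) <= pi / 2 by rewrite divr_ge0 // ltW.
  have [th0 /andP[th00 _] hth0] := ss_ivt hle s0 s1 mid01.
  set th := th0 + pi.
  have hth : ss th = mid by rewrite /th ss_pi.
  have [d d0 Hd] := cont_ball th (@ss_cont R) r0.
  set e := Num.min d 1.
  have e0 : 0 < e by rewrite /e lt_min d0 ltr01.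
  have e1 : e <= 1 by rewrite /e ge_min lexx orbT.
  have ed : e <= d by rewrite /e ge_min lexx.
  have eth : e < th by have := pi_ge2 R; rewrite /th; lra.
  apply: (all_bad e0 eth _ a01 Ga) => y /andP[y1 y2] Gy.
  have hy : `|th - y| < d by rewrite ltr_norml; apply/andP; split; lra.
  have := Hd y hy; rewrite hth ltr_norml => /andP[h1 h2].
  apply: Hn; exists (ss y); split => //.
  by move: h1 h2; rewrite /mid /r /lam_lo /lam_hi => h1 h2; apply/andP; split; lra.
set l := t / q.
have hl : lam_lo <= l <= lam_hi.
  by rewrite /l ler_pdivlMr // ler_pdivrMr // t1 t2.
have hlx : logistic l x = t.
  by rewrite /logistic -mulrA -/q /l mulrVK // unitfE gt_eqF.
rewrite -hlx in Pn.
have [c [c0 [δ [d0 H]]]] := step hl Pn.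
exists n.+1; split => //.
apply: lt_le_trans (H x _); first by rewrite lte_fin.
by rewrite subrr normr0.
Qed.
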